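(* Let $P=\{x\in\mathbb{R}^n: Ax\ge b\}$ with rational data be full-dimensional and pointed, let $\mathcal{I}\subseteq\{1,\dots,n\}$, $P_I=\{x\in P: x_j\in\mathbb{Z}\ \forall j\in\mathcal{I}\}$, and let $c\in\mathbb{R}^n$. Let $\mathcal{T}$ be finite and $P^t=\{x\in P: D^tx\ge D^t_0\}$, $t\in\mathcal{T}$, be the terms of a disjunction with $P_I\subseteq P_D:=\operatorname{cl}\operatorname{conv}(\bigcup_t P^t)$. For each $t\in\mathcal{T}$, let $p^t$ be a basic optimal solution to $\min\{c^\top x: x\in P^t\}$ with an associated cobasis, let $C^t$ be the basis cone at $p^t$, with extreme rays $r^{t1},\dots,r^{tn}$. Then the simple point-ray collection $(\mathcal{P}^0,\mathcal{R}^0)$, where $\mathcal{P}^0=\{p^t: t\in\mathcal{T}\}$ and $\mathcal{R}^0=\{r^{tj}: t\in\mathcal{T}, j\in[n]\}$, is proper.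
   Context: A cobasis of the basic solution $p^t$ is a set of $n$ linearly independent inequalities from the system defining $P^t$ (those corresponding to nonbasic variables) that are tight at $p^t$; the basis cone $C^t$ is the intersection of these $n$ half-spaces, a cone with apex $p^t$ and $n$ extreme rays. For finite $\mathcal{P},\mathcal{R}\subset\mathbb{R}^n$, the point-ray linear program (PRLP) has feasible region $\{(\alpha,\beta): \alpha^\top p\ge\beta\ \forall p\in\mathcal{P},\ \alpha^\top r\ge 0\ \forall r\in\mathcal{R}\}$, and $(\mathcal{P},\mathcal{R})$ is proper if $\alpha^\top x\ge\beta$ is valid for $P_I$ whenever $(\alpha,\beta)$ is PRLP-feasible. It is assumed (implicitly, for the definition) that each $\min\{c^\top x: x\in P^t\}$ has a basic optimal solution. *)

(* Defs.v *)
From HB Require Import structures.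
From mathcomp Require Import all_boot all_order all_algebra.
From mathcomp Require Import all_classical all_reals all_analysis.
Set Implicit Arguments. Unset Strict Implicit. Unset Printing Implicit Defensive.
Import Order.TTheory GRing.Theory Num.Theory.
Import numFieldNormedType.Exports.
Local Open Scope classical_set_scope.
Local Open Scope ring_scope.

Section Defs.
Variable R : realType.

Definition dotv n (u v : 'cV[R]_n) : R := \sum_(i < n) u i 0 * v i 0.

Definition polyh m n (A : 'M[R]_(m, n)) (b : 'cV[R]_m) : set 'cV[R]_n :=
  [set x | forall i : 'I_m, b i 0 <= (A *m x) i 0].

Definition pointed n (S : set 'cV[R]_n) : Prop :=
  ~ exists x d, S x /\ d != 0 /\ forall l : R, S (x + l *: d).

Definition full_dim n (S : set 'cV[R]_n) : Prop := interior S !=set0.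

Definition convhull n (S : set 'cV[R]_n) : set 'cV[R]_n :=
  [set x | exists (N : nat) (lam : 'I_N -> R) (y : 'I_N -> 'cV[R]_n),
     (forall k, 0 <= lam k) /\ \sum_(k < N) lam k = 1 /\ (forall k, S (y k)) /\
     x = \sum_(k < N) lam k *: y k].

Definition mixed_int n (S : set 'cV[R]_n) (I : {set 'I_n}) : set 'cV[R]_n :=
  [set x | S x /\ forall j, j \in I -> x j 0 \is a Num.int].

Definition extreme_dir n (K : set 'cV[R]_n) (r : 'cV[R]_n) : Prop :=
  K r /\ r != 0 /\
  forall u v, K u -> K v -> r = u + v ->
    exists lu lv : R, 0 <= lu /\ 0 <= lv /\ u = lu *: r /\ v = lv *: r.

Definition proper_pr n (SI Pts Rys : set 'cV[R]_n) : Prop :=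
  forall (alpha : 'cV[R]_n) (beta : R),
    (forall p, Pts p -> beta <= dotv alpha p) ->
    (forall r, Rys r -> 0 <= dotv alpha r) ->
    forall x, SI x -> beta <= dotv alpha x.

End Defs.

(* Stacked constraint system of a disjunctive term P^t = {x : A x >= b, D x >= d0}. *)
Definition stack_mat (R : realType) m k n (A : 'M[R]_(m, n)) (D : 'M[R]_(k, n)) :
  'M[R]_(m + k, n) := col_mx A D.
Definition stack_rhs (R : realType) m k (b : 'cV[R]_m) (d0 : 'cV[R]_k) :
  'cV[R]_(m + k) := col_mx b d0.

(* Main.v *)
Require Import Defs.
From HB Require Import structures.
From mathcomp Require Import all_boot all_order all_algebra.
From mathcomp Require Import all_classical all_reals all_analysis.
Import Order.TTheory GRing.Theory Num.Theory.
Import numFieldNormedType.Exports.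
Local Open Scope classical_set_scope.
Local Open Scope ring_scope.

Section H.
Variable R : realType.

Lemma dotvE n (a x : 'cV[R]_n) : dotv a x = (a^T *m x) 0 0.
Proof. by rewrite /dotv !mxE; apply: eq_bigr => i _; rewrite !mxE. Qed.

Lemma dotvD n (a x y : 'cV[R]_n) : dotv a (x + y) = dotv a x + dotv a y.
Proof. by rewrite !dotvE mulmxDr mxE. Qed.

Lemma dotvB n (a x y : 'cV[R]_n) : dotv a (x - y) = dotv a x - dotv a y.
Proof. by rewrite /dotv -sumrB; apply: eq_bigr => i _; rewrite !mxE mulrBr. Qed.

Lemma dotvZ n (a x : 'cV[R]_n) l : dotv a (l *: x) = l * dotv a x.
Proof. by rewrite !dotvE -scalemxAr mxE. Qed.

Lemma dotv_sum n (a : 'cV[R]_n) N (y : 'I_N -> 'cV[R]_n) :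
  dotv a (\sum_(k < N) y k) = \sum_(k < N) dotv a (y k).
Proof.
rewrite dotvE mulmx_sumr summxE; apply: eq_bigr => k _; by rewrite dotvE.
Qed.

Lemma sum_cont n (a : 'cV[R]_n) (s : seq 'I_n) :
  continuous (fun y : 'cV[R]_n => \sum_(i <- s) a i 0 * y i 0).
Proof.
elim: s => [|i s IH] x.
  have -> : (fun y : 'cV[R]_n => \sum_(i <- [::]) a i 0 * y i 0) = fun _ => 0.
    by apply: funext => y; rewrite big_nil.
  exact: cst_continuous.
have -> : (fun y : 'cV[R]_n => \sum_(j <- i :: s) a j 0 * y j 0) =
  (fun y => a i 0 * y i 0 + \sum_(j <- s) a j 0 * y j 0).
  by apply: funext => y; rewrite big_cons.
apply: (@continuousD _ _ _ (fun y : 'cV[R]_n => a i 0 * y i 0)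
  (fun y : 'cV[R]_n => \sum_(j <- s) a j 0 * y j 0)); last exact: IH.
apply: (@continuousM _ _ (fun _ : 'cV[R]_n => a i 0) (fun y : 'cV[R]_n => y i 0));
  first exact: cst_continuous.
exact: coord_continuous.
Qed.

Lemma dotv_cont n (a : 'cV[R]_n) : continuous (dotv a).
Proof. exact: sum_cont. Qed.

Lemma closed_half n (a : 'cV[R]_n) beta : closed [set y | beta <= dotv a y].
Proof.
have -> : [set y | beta <= dotv a y] = dotv a @^-1` [set z | beta <= z] by [].
apply: preimage_closed; last exact: closed_ge.
move=> z _; exact: dotv_cont.
Qed.


Definition ee {n} (M : 'M[R]_n) (i : 'I_n) : 'cV[R]_n := invmx M *m delta_mx i (0:'I_1).

Lemma ext_ray n (M : 'M[R]_n) (d : 'cV[R]_n) : M \in unitmx ->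
  extreme_dir (polyh M 0) d ->
  exists i, 0 < (M *m d) i 0 /\ d = (M *m d) i 0 *: ee M i.
Proof.
move=> uM [Kd [d0 ext]].
set y := M *m d.
have yE : M *m d = y by [].
clearbody y.
have ypos : forall j, 0 <= y j 0 by move=> j; move: (Kd j); rewrite yE mxE.
have [i yi] : exists i, y i 0 != 0.
  case: (pickP (fun i => y i 0 != 0)) => [i Hi | H]; first by exists i.
  exfalso; move/eqP: d0; apply.
  have y0 : y = 0.
    apply/matrixP => a b; rewrite (ord1 b) [RHS]mxE.
    by have := H a; move=> /= /negbFE /eqP.
  by rewrite -(mulKmx uM d) yE y0 mulmx0.
pose u : 'cV[R]_n := invmx M *m (y i 0 *: delta_mx i (0:'I_1)).
have Mu : M *m u = y i 0 *: delta_mx i (0:'I_1) by rewrite /u mulKVmx.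
have Ku : polyh M 0 u.
  move=> j; rewrite Mu !mxE; apply: mulr_ge0; last exact: ler0n.
  exact: ypos.
have Kv : polyh M 0 (d - u).
  move=> j; rewrite mulmxBr Mu yE !mxE eqxx andbT; case: eqVneq => [->|_].
    by rewrite mulr1 subr_ge0.
  by rewrite /= mulr0 subr0.
have [lu [lv [_ [_ [ud _]]]]] := ext u (d - u) Ku Kv (esym (subrKC u d)).
have lu1 : lu = 1.
  have := congr1 (fun z => (M *m z) i 0) ud; rewrite /= Mu -scalemxAr yE !mxE !eqxx mulr1.
  move=> E; apply/eqP; rewrite eq_sym -subr_eq0.
  have : (1 - lu) * y i 0 = 0 by rewrite mulrBl mul1r -E subrr.
  by move/eqP; rewrite mulf_eq0 (negbTE yi) orbF.
exists i; split; first by rewrite lt_def yi ypos.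
by rewrite /ee scalemxAr -/u ud lu1 scale1r.
Qed.


Lemma cone_bound n (M : 'M[R]_n) (q x : 'cV[R]_n) (rr : 'I_n -> 'cV[R]_n)
  (alpha : 'cV[R]_n) (beta : R) :
  M \in unitmx ->
  (forall j, extreme_dir (polyh M 0) (rr j)) ->
  (forall j j' : 'I_n, j != j' -> ~ exists l : R, 0 < l /\ rr j = l *: rr j') ->
  beta <= dotv alpha q -> (forall j, 0 <= dotv alpha (rr j)) ->
  (forall i, (M *m q) i 0 <= (M *m x) i 0) ->
  beta <= dotv alpha x.
Proof.
move=> uM hext hdist hq hr hx.
have [s hs] := fin_all_exists (fun j => @ext_ray n M (rr j) uM (hext j)).
have sinj : injective s.
  move=> j j' E; case: (eqVneq j j') => // /hdist H; exfalso; apply: H.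
  have [p1 e1] := hs j; have [p2 e2] := hs j'.
  move: p1 e1 p2 e2.
  move: ((M *m rr j) (s j) 0) ((M *m rr j') (s j') 0) => a b p1 e1 p2 e2.
  exists (a / b); split; first by rewrite divr_gt0.
  by rewrite [in RHS]e2 scalerA divfK ?gt_eqF // -E -e1.
have [g sg gs] := injF_bij sinj.
have he : forall i, 0 <= dotv alpha (ee M i).
  move=> i; have [p1 e1] := hs (g i); rewrite gs in e1 p1.
  have -> : ee M i = ((M *m rr (g i)) i 0)^-1 *: rr (g i).
    by rewrite {2}e1 scalerA mulVf ?gt_eqF // scale1r.
  by rewrite dotvZ mulr_ge0 // invr_ge0 ltW.
set z := M *m (x - q).
have zpos : forall i, 0 <= z i 0.
  move=> i; have := hx i; rewrite -subr_ge0 /z mulmxBr.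
  by rewrite !mxE.
have xq : x - q = \sum_i z i 0 *: ee M i.
  rewrite -(mulKmx uM (x - q)) -/z {1}(matrix_sum_delta z) mulmx_sumr.
  apply: eq_bigr => i _; rewrite big_ord1 /ee scalemxAr.
  done.
have : 0 <= dotv alpha (x - q).
  rewrite xq dotv_sum; apply: sumr_ge0 => i _; rewrite dotvZ.
  exact: mulr_ge0.
rewrite dotvB subr_ge0; exact: le_trans.
Qed.

End H.

Lemma rowsub_mulE (R : realType) p q n (f : 'I_p -> 'I_q) (A : 'M[R]_(q, n)) (B : 'cV[R]_n) i :
  (rowsub f A *m B) i 0 = (A *m B) (f i) 0.
Proof. by rewrite !mxE; apply: eq_bigr => k _; rewrite !mxE. Qed.

Theorem proposition1
  (R : realType) (m n : nat)
  (A : 'M[rat]_(m, n)) (b : 'cV[rat]_m)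
  (I : {set 'I_n}) (c : 'cV[R]_n)
  (T : finType) (k : T -> nat)
  (D : forall t : T, 'M[R]_(k t, n)) (D0 : forall t : T, 'cV[R]_(k t))
  (p : T -> 'cV[R]_n)
  (cob : forall t : T, 'I_n -> 'I_(m + k t))
  (r : T -> 'I_n -> 'cV[R]_n) :
  let P := polyh (map_mx ratr A) (map_mx ratr b) in
  let PI := mixed_int P I in
  let Pt := fun t => P `&` polyh (D t) (D0 t) in
  let G := fun t => stack_mat (map_mx ratr A) (D t) in
  let g := fun t => stack_rhs (map_mx ratr b) (D0 t) in
  (* basis cone C^t at p^t : intersection of the n cobasic half-spaces *)
  let C := fun t => polyh (rowsub (cob t) (G t)) (rowsub (cob t) (g t)) in
  (* its recession cone, whose extreme directions are the extreme rays of C^t *)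
  let recC := fun t => polyh (rowsub (cob t) (G t)) 0 in
  full_dim P ->
  pointed P ->
  PI `<=` closure (convhull (\bigcup_t Pt t)) ->
  (* p^t is an optimal solution of min {c^T x : x in P^t} *)
  (forall t, Pt t (p t) /\ forall x, Pt t x -> dotv c (p t) <= dotv c x) ->
  (* cob t is a cobasis of p^t: n linearly independent constraints of the
     system defining P^t, tight at p^t *)
  (forall t, row_free (rowsub (cob t) (G t))) ->
  (forall t (i : 'I_n), (G t *m p t) (cob t i) 0 = g t (cob t i) 0) ->
  (* r^{t1}, ..., r^{tn} are the (n distinct) extreme rays of C^t *)
  (forall t j, extreme_dir (recC t) (r t j)) ->
  (forall t (j j' : 'I_n), j != j' ->
      ~ exists l : R, 0 < l /\ r t j = l *: r t j') ->
  proper_pr PI [set p t | t in [set: T]]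
               [set r tj.1 tj.2 | tj in [set: (T * 'I_n)%type]].
Proof.
move=> P PI Pt G g C recC _ _ hsub hopt hfree htight hext hdist.
move=> alpha beta Hp Hr x PIx.
have inG : forall t y, Pt t y -> forall i, g t i 0 <= (G t *m y) i 0.
  move=> t y [Py Dy] i; rewrite /G /g /stack_mat /stack_rhs mul_col_mx.
  rewrite -(splitK i); case: (fintype.split i) => j /=.
    by rewrite !col_mxEu; have := Py j; rewrite /=.
  by rewrite !col_mxEd; have := Dy j.
have key : forall t y, Pt t y -> beta <= dotv alpha y.
  move=> t y Pty.
  apply: (@cone_bound R n (rowsub (cob t) (G t)) (p t) y (r t)).
  - by rewrite -row_free_unit.
  - exact: hext.
  - exact: hdist.
  - by apply: Hp; exists t.
  - by move=> j; apply: Hr; exists (t, j).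
  - move=> i; rewrite !rowsub_mulE htight; exact: inG.
have cl := hsub x PIx.
rewrite closureEbigcap in cl.
apply: (cl [set y | beta <= dotv alpha y]); split; first exact: closed_half.
move=> y [N [lam [z [lam0 [lam1 [zin ->]]]]]].
rewrite /= dotv_sum.
have -> : beta = \sum_(k0 < N) lam k0 * beta by rewrite -mulr_suml lam1 mul1r.
apply: ler_sum => k0 _; rewrite dotvZ; apply: ler_wpM2l => //.
have [t _ Pz] := zin k0; exact: key Pz.
Qed.
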